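(* Let $G\in\mathcal{RG}^{{\underline{\kappa}},*}_{g,n}$ be non-bipartite and $\underline b\in\mathbb R^n$. A point $w\in\operatorname{vp}_G^{-1}(\underline b)$ is a vertex of $P_G(\underline b)$ if and only if $w(e)\ge0$ for all $e\in E(G)\setminus S(G)$ and the edge set $F=\{e\in E(G)\setminus S(G):w(e)>0\}$ forms a disjoint union of trees and/or one-odd-cycle graphs. Moreover, the cone of feasible directions of $P_G(\underline b)$ at such a vertex is $\{v\in\operatorname{vp}_G^{-1}(0):v(e)\ge0\ \forall e\in E(G)\setminus(S(G)\cup F)\}$; in particular it depends only on $F$ and not on $\underline b$.
   Context: $\mathcal{RG}^{{\underline{\kappa}},*}_{g,n}$: connected ribbon graphs of genus $g$ with $n$ labeled vertices and faces of odd degrees ${\underline{\kappa}}$. $\operatorname{vp}_G:\mathbb R^{E(G)}\to\mathbb R^n$, $\operatorname{vp}_G(w)_v=\sum_e a_{ve}w(e)$ ($a_{ve}=2$ for a loop at $v$, $1$ for other incident edges, $0$ otherwise). Static edges $S(G)$: edges $e$ such that some component of $G-e$ is bipartite. $P_G(\underline b)=\{w\in\operatorname{vp}_G^{-1}(\underline b):w(e)\ge0\ \forall e\in E(G)\setminus S(G)\}$. A one-odd-cycle graph is a connected graph with exactly one simple cycle, of odd length. The cone of feasible directions of a polyhedron $P$ at $p$ is $\{v: p+\varepsilon v\in P\text{ for some }\varepsilon>0\}$. *)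

(* Defs.v *)
From HB Require Import structures.
From mathcomp Require Import all_boot all_order all_fingroup all_algebra.
From mathcomp Require Import reals.
Set Implicit Arguments. Unset Strict Implicit. Unset Printing Implicit Defensive.
Import Order.TTheory GRing.Theory Num.Theory.
Local Open Scope ring_scope.

(* A ribbon graph is encoded by darts (half-edges) E * bool; the edge
   involution sigma1 flips the boolean, sigma0 : {perm E * bool} is the
   cyclic order at vertices, and lab : E * bool -> 'I_n labels the vertex
   (sigma0-cycle) of each dart.  Faces are the cycles of sigma0 \o sigma1. *)

Definition sigma1 (E : finType) (d : E * bool) : E * bool := (d.1, ~~ d.2).

Definition sigma2 (E : finType) (s0 : {perm E * bool}) (d : E * bool) : E * bool :=
  s0 (sigma1 d).

Section Graph.
Variables (E : finType) (n : nat) (lab : E * bool -> 'I_n).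

Definition joins (e : E) (u v : 'I_n) : bool :=
  ((lab (e, false) == u) && (lab (e, true) == v)) ||
  ((lab (e, false) == v) && (lab (e, true) == u)).

Definition adj (X : {set E}) : rel 'I_n := fun u v => [exists e in X, joins e u v].

Definition component (X : {set E}) (u : 'I_n) : {set 'I_n} :=
  [set v | connect (adj X) u v].

Definition bipartite_on (X : {set E}) (C : {set 'I_n}) : bool :=
  [exists col : {ffun 'I_n -> bool},
     [forall e in X, (lab (e, false) \in C) ==>
        (col (lab (e, false)) != col (lab (e, true)))]].

Definition connected_graph : Prop := forall u v, connect (adj setT) u v.

Definition bipartite_graph : bool := bipartite_on setT setT.

Definition static_edge (e : E) : bool :=
  [exists u, bipartite_on (setT :\ e) (component (setT :\ e) u)].

Definition inc (v : 'I_n) (e : E) : nat :=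
  (lab (e, false) == v) + (lab (e, true) == v).

Definition is_cycle_set (X : {set E}) : Prop :=
  exists k (es : k.+1.-tuple E) (vs : k.+1.-tuple 'I_n),
    [/\ uniq es, uniq vs, X = [set x in es] &
        forall i : 'I_k.+1, joins (tnth es i) (tnth vs i) (tnth vs (ordS i))].

Definition trees_or_odd_unicyclic (F : {set E}) : Prop :=
  forall u : 'I_n,
    let FC := [set e in F | lab (e, false) \in component F u] in
    (forall X : {set E}, X \subset FC -> ~ is_cycle_set X) \/
    (exists X : {set E}, [/\ X \subset FC, is_cycle_set X, odd #|X| &
                  forall Y : {set E}, Y \subset FC -> is_cycle_set Y -> Y = X]).

Variable R : realType.

Definition vp (w : {ffun E -> R}) : {ffun 'I_n -> R} :=
  [ffun v => \sum_e (inc v e)%:R * w e].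

Definition inP (b : {ffun 'I_n -> R}) (w : {ffun E -> R}) : Prop :=
  vp w = b /\ forall e, ~~ static_edge e -> 0 <= w e.

Definition Fset (w : {ffun E -> R}) : {set E} :=
  [set e | ~~ static_edge e & 0 < w e].

End Graph.

Definition is_vertex (R : realType) (E : finType) (P : {ffun E -> R} -> Prop)
    (w : {ffun E -> R}) : Prop :=
  P w /\ forall (u v : {ffun E -> R}) (t : R), P u -> P v -> 0 < t < 1 ->
    w = [ffun e => t * u e + (1 - t) * v e] -> u = v.

Definition feasible_dir (R : realType) (E : finType) (P : {ffun E -> R} -> Prop)
    (p v : {ffun E -> R}) : Prop :=
  exists eps : R, 0 < eps /\ P [ffun e => p e + eps * v e].

Definition is_ribbon_graph (g n : nat) (kappa : seq nat) (E : finType)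
    (s0 : {perm E * bool}) (lab : E * bool -> 'I_n) : Prop :=
  [/\ (forall d d', (lab d == lab d') = fconnect s0 d d') /\
        (forall i, exists d, lab d = i),
      connected_graph lab,
      all odd kappa,
      perm_eq [seq fingraph.order (sigma2 s0) d | d <- enum (froots (sigma2 s0))] kappa &
      (n + size kappa + 2 * g = #|E| + 2)%N ].

(* Main.v *)
Require Import Defs.
From HB Require Import structures.
From mathcomp Require Import all_boot all_order all_fingroup all_algebra.
From mathcomp Require Import reals.
From mathcomp Require Import zify ring lra.
From Stdlib Require Import Classical.
Import Order.TTheory GRing.Theory Num.Theory.
Local Open Scope ring_scope.
Set Implicit Arguments. Unset Strict Implicit. Unset Printing Implicit Defensive.

Section Walks.
Variables (E : finType) (n : nat) (lab : E * bool -> 'I_n).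

Lemma sigma1K (d : E * bool) : sigma1 (sigma1 d) = d.
Proof. by case: d => e b; rewrite /sigma1 /= negbK. Qed.

Lemma joins_dart (d : E * bool) : joins lab d.1 (lab d) (lab (sigma1 d)).
Proof. by case: d => e [] /=; rewrite /joins /sigma1 /= !eqxx ?orbT. Qed.

Lemma joins_sym e a c : joins lab e a c = joins lab e c a.
Proof. by rewrite /joins orbC. Qed.

Lemma joins_inc e a c y : joins lab e a c -> inc lab y e = ((a == y) + (c == y))%N.
Proof. by rewrite /joins /inc => /orP [] /andP [/eqP -> /eqP ->] //; rewrite addnC. Qed.

Lemma joins_end e a c : joins lab e a c -> a = lab (e, false) \/ a = lab (e, true).
Proof. by rewrite /joins => /orP [] /andP [/eqP -> /eqP ->]; [left|right]. Qed.

Lemma joins_mem e a c a' c' : joins lab e a c -> joins lab e a' c' -> a \in [:: a'; c'].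
Proof.
rewrite /joins !inE => /orP[]/andP[/eqP H1 /eqP H2] /orP[]/andP[/eqP H3 /eqP H4];
by subst; rewrite eqxx ?orbT.
Qed.

Definition cdart (e : E) (a : 'I_n) : E * bool :=
  if lab (e, false) == a then (e, false) else (e, true).

Lemma cdart_ok e a c : joins lab e a c ->
  [/\ (cdart e a).1 = e, lab (cdart e a) = a & lab (sigma1 (cdart e a)) = c].
Proof.
rewrite /joins /cdart /sigma1 => /orP [] /andP [/eqP H1 /eqP H2].
  by rewrite H1 eqxx /=.
case: eqP => /= [H3|H3]; last by [].
by rewrite H2 -H1 H3.
Qed.

Fixpoint wk (a c : 'I_n) (s : seq (E * bool)) : bool :=
  if s is d :: s' then (lab d == a) && wk (lab (sigma1 d)) c s' else a == c.

Lemma wk_cat a b c s1 s2 : wk a b s1 -> wk b c s2 -> wk a c (s1 ++ s2).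
Proof.
elim: s1 a => [|d s1 IH] a /=; first by move/eqP->.
by case/andP=> -> /IH H /H.
Qed.

Lemma wk_rev a b s : wk a b s -> wk b a (rev (map (@sigma1 E) s)).
Proof.
elim: s a => [|d s IH] a /=; first by move/eqP->; rewrite eqxx.
case/andP=> /eqP Hd /IH H. rewrite rev_cons -cats1. apply: wk_cat H _ => /=.
by rewrite sigma1K Hd !eqxx.
Qed.

Lemma wk_iota (g : nat -> E * bool) m s :
  (forall t, s <= t < s + m -> lab (sigma1 (g t)) = lab (g t.+1))%N ->
  wk (lab (g s)) (lab (g (s + m)%N)) (map g (iota s m)).
Proof.
elim: m s => [|m IH] s H /=; first by rewrite addn0 eqxx.
rewrite eqxx /= H; last by rewrite leqnn addnS ltnS leq_addr.
rewrite -addSnnS; apply: IH => t /andP [H1 H2]; apply: H.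
by rewrite addnS ltnW //= -addSnnS.
Qed.

Fixpoint altz (s : seq (E * bool)) (e : E) : int :=
  if s is d :: s' then ((d.1 == e)%:Z - altz s' e)%R else 0%R.

Lemma altz_count s e : exists z : int,
  altz s e = ((count (fun d => d.1 == e) s)%:Z - 2 * z)%R.
Proof.
elim: s => [|d s [z IH]] /=; first by exists 0%R.
exists ((count (fun d => d.1 == e) s)%:Z - z)%R.
rewrite IH PoszD; ring.
Qed.

Lemma altz_neq0 s e : odd (count (fun d => d.1 == e) s) -> altz s e != 0%R.
Proof.
case: (altz_count s e) => z ->; set c := count _ _ => Hc.
apply/negP => /eqP H.
have H2 : (c%:Z = 2 * z)%R by apply/eqP; rewrite -subr_eq0 H.
have := odd_double_half c; rewrite Hc => Hc2.
move: H2; rewrite -Hc2 -muln2; lia.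
Qed.

Lemma altz_nil s e : (forall d, d \in s -> d.1 != e) -> altz s e = 0%R.
Proof.
elim: s => [|d s IH] //= H.
rewrite IH; last by move=> d' Hd'; apply: H; rewrite inE Hd' orbT.
by rewrite (negbTE (H d (mem_head _ _))) subr0.
Qed.

Variable R : realType.

Fixpoint altsum (s : seq (E * bool)) (y : 'I_n) : R :=
  if s is d :: s' then (lab d == y)%:R + (lab (sigma1 d) == y)%:R - altsum s' y else 0.

Lemma altsum_wk a c s y : wk a c s ->
  altsum s y = (a == y)%:R - (-1) ^+ size s * (c == y)%:R.
Proof.
elim: s a => [|d s IH] a /=; first by move/eqP ->; rewrite expr0 mul1r subrr.
case/andP => /eqP -> /IH ->. rewrite exprS; ring.
Qed.

Lemma altsum_closed a s y : wk a a s -> ~~ odd (size s) -> altsum s y = 0.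
Proof. by move=> H Ho; rewrite (altsum_wk y H) -signr_odd (negbTE Ho) expr0 mul1r subrr. Qed.

Lemma dartsum (f : E -> R) y :
  \sum_e (inc lab y e)%:R * f e = \sum_(d : E * bool) (lab d == y)%:R * f d.1.
Proof.
transitivity (\sum_(d : E * bool) (lab (d.1, d.2) == y)%:R * f d.1).
  rewrite -(pair_bigA _ (fun e b => (lab (e, b) == y)%:R * f e)) /=.
  apply: eq_bigr => e _; rewrite big_bool /inc natrD mulrDl addrC //.
by apply: eq_bigr => [[e b]] _.
Qed.

Definition wvec (s : seq (E * bool)) : {ffun E -> R} := [ffun e => (altz s e)%:~R].

Lemma vp_wvec s y : vp lab (wvec s) y = altsum s y.
Proof.
rewrite ffunE; elim: s => [|d s IH] /=.
  by rewrite big1 // => e _; rewrite ffunE mulr0.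
rewrite -IH.
transitivity (\sum_e (inc lab y e)%:R * ((d.1 == e)%:R : R) -
              \sum_e (inc lab y e)%:R * wvec s e).
  rewrite -sumrB; apply: eq_bigr => e _; rewrite !ffunE intrD intrN mulrDr mulrN.
  by case: (d.1 == e).
congr (_ - _).
rewrite (bigD1 d.1) //= eqxx mulr1 big1 ?addr0.
  by case: d => e [] /=; rewrite /inc /sigma1 /= natrD // addrC.
by move=> e; rewrite eq_sym => /negbTE ->; rewrite mulr0.
Qed.

End Walks.

Lemma modSm x d : ((x %% d).+1 %% d = x.+1 %% d)%N.
Proof. by rewrite -addn1 modnDml addn1. Qed.

Lemma tnth_uniq_eq k (T : eqType) (t : k.-tuple T) i j :
  uniq t -> (tnth t i == tnth t j) = (i == j).
Proof. by move/tuple_uniqP => U; apply/eqP/eqP => [/U|->]. Qed.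

Section CycleVec.
Variables (E : finType) (n : nat) (lab : E * bool -> 'I_n) (R : realType).

Definition cwalk k (es : k.+1.-tuple E) (vs : k.+1.-tuple 'I_n) : seq (E * bool) :=
  map (fun t => cdart lab (tnth es (@inord k (t %% k.+1))) (tnth vs (@inord k (t %% k.+1))))
      (iota 0 k.+1).

Lemma ordS_inord k t : ordS (@inord k (t %% k.+1)) = inord (t.+1 %% k.+1).
Proof. by apply: val_inj => /=; rewrite !inordK ?ltn_pmod // modSm. Qed.

Section OneCycle.
Variables (k : nat) (es : k.+1.-tuple E) (vs : k.+1.-tuple 'I_n).
Hypothesis J : forall i, joins lab (tnth es i) (tnth vs i) (tnth vs (ordS i)).

Lemma cwalk_wk : wk lab (tnth vs ord0) (tnth vs ord0) (cwalk es vs).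
Proof.
set g := (fun t => cdart lab (tnth es (@inord k (t %% k.+1))) (tnth vs (@inord k (t %% k.+1)))).
have Hl t : lab (g t) = tnth vs (inord (t %% k.+1)) by case: (cdart_ok (J (inord (t %% k.+1)))).
have Hs t : lab (sigma1 (g t)) = lab (g t.+1).
  by rewrite Hl; case: (cdart_ok (J (inord (t %% k.+1)))) => _ _ ->; rewrite ordS_inord.
have := wk_iota (g := g) (m := k.+1) (s := 0) (fun t _ => Hs t).
rewrite !Hl add0n modnn mod0n.
have -> : @inord k 0 = ord0 by apply: val_inj; rewrite /= inordK.
by [].
Qed.

Lemma cwalk_size : size (cwalk es vs) = k.+1.
Proof. by rewrite size_map size_iota. Qed.

Lemma cwalk_edges d : d \in cwalk es vs -> d.1 \in es.
Proof.
case/mapP => t _ ->.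
by case: (cdart_ok (J (inord (t %% k.+1)))) => -> _ _; apply: mem_tnth.
Qed.

Lemma cwalk_count i : uniq es -> count (fun d => d.1 == tnth es i) (cwalk es vs) = 1%N.
Proof.
move=> U; rewrite count_map.
rewrite (@eq_in_count _ _ (pred1 (val i))); last first.
  move=> t; rewrite mem_iota add0n => Ht /=.
  case: (cdart_ok (J (inord (t %% k.+1)))) => -> _ _.
  by rewrite modn_small // tnth_uniq_eq // -val_eqE /= inordK.
by rewrite count_uniq_mem ?iota_uniq // mem_iota add0n ltn_ord.
Qed.

End OneCycle.

Lemma path_of_connect F a c : connect (adj lab F) a c ->
  exists2 P, wk lab a c P & forall d, d \in P -> d.1 \in F.
Proof.
move/connectP => [p Hp ->]; elim: p a Hp => [|y p IH] a /=.
  by move=> _; exists [::]; rewrite /= ?eqxx.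
case/andP => /existsP [e /andP [eF Je]] /IH [P HP HF].
case: (cdart_ok Je) => H1 H2 H3.
exists (cdart lab e a :: P); first by rewrite /= H2 H3 eqxx.
by move=> d; rewrite inE => /orP [/eqP -> | /HF]; rewrite ?H1.
Qed.

Lemma wvec_good (F : {set E}) W a : wk lab a a W -> ~~ odd (size W) ->
  (forall d, d \in W -> d.1 \in F) -> forall e, odd (count (fun d => d.1 == e) W) ->
  exists v : {ffun E -> R}, [/\ vp lab v = 0, forall e, e \notin F -> v e = 0 & v != 0].
Proof.
move=> HW Hs HF e He; exists (wvec R W); split.
- by apply/ffunP => y; rewrite vp_wvec ffunE (altsum_closed _ _ HW).
- move=> e' He'; rewrite ffunE altz_nil //.
  by move=> d Hd; apply: contraNneq He' => <-; apply: HF.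
- apply/eqP => /ffunP /(_ e); rewrite !ffunE => /eqP; rewrite intr_eq0.
  by apply/negP; apply: altz_neq0.
Qed.

Lemma even_cycle_vec (F : {set E}) k (es : k.+1.-tuple E) vs : uniq es ->
  (forall i, joins lab (tnth es i) (tnth vs i) (tnth vs (ordS i))) ->
  (forall x, x \in es -> x \in F) -> ~~ odd k.+1 ->
  exists v : {ffun E -> R}, [/\ vp lab v = 0, forall e, e \notin F -> v e = 0 & v != 0].
Proof.
move=> U J HF Ho.
apply: (@wvec_good F (cwalk es vs) (tnth vs ord0) (cwalk_wk J) _ _ (tnth es ord0)).
- by rewrite cwalk_size.
- by move=> d Hd; apply/HF/(cwalk_edges J).
- by rewrite (cwalk_count J ord0 U).
Qed.

Lemma two_cycle_vec (F : {set E}) k1 (es1 : k1.+1.-tuple E) vs1 k2 (es2 : k2.+1.-tuple E) vs2 e :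
  uniq es1 ->
  (forall i, joins lab (tnth es1 i) (tnth vs1 i) (tnth vs1 (ordS i))) ->
  (forall i, joins lab (tnth es2 i) (tnth vs2 i) (tnth vs2 (ordS i))) ->
  (forall x, x \in es1 -> x \in F) -> (forall x, x \in es2 -> x \in F) ->
  odd k1.+1 -> odd k2.+1 -> e \in es1 -> e \notin es2 ->
  connect (adj lab F) (tnth vs1 ord0) (tnth vs2 ord0) ->
  exists v : {ffun E -> R}, [/\ vp lab v = 0, forall e, e \notin F -> v e = 0 & v != 0].
Proof.
move=> U1 J1 J2 F1 F2 O1 O2 He1 He2 /path_of_connect [P HP HPF].
set W := cwalk es1 vs1 ++ P ++ cwalk es2 vs2 ++ rev (map (@sigma1 E) P).
have HPr := wk_rev HP.
have HW : wk lab (tnth vs1 ord0) (tnth vs1 ord0) W.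
  apply: wk_cat (cwalk_wk J1) _; apply: wk_cat HP _.
  apply: wk_cat (cwalk_wk J2) _; exact: HPr.
apply: (@wvec_good F W _ HW _ _ e).
- rewrite /W !size_cat !cwalk_size size_rev size_map !oddD.
  by rewrite O1 O2; case: (odd (size P)).
- move=> d; rewrite !mem_cat mem_rev => /or4P [/(cwalk_edges J1)/F1|/HPF|/(cwalk_edges J2)/F2|] //.
  by case/mapP => d' /HPF Hd' ->.
- have c2 : count (fun d => d.1 == e) (cwalk es2 vs2) = 0%N.
    apply/eqP; rewrite -leqn0 leqNgt -has_count; apply/hasPn => d Hd /=.
    by apply: contraNneq He2 => <-; apply: (cwalk_edges J2 Hd).
  case/tnthP: He1 => i Hi.
  rewrite !count_cat count_rev c2 Hi (cwalk_count J1 i U1) count_map.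
  have -> : count (preim (@sigma1 E) (fun d => d.1 == tnth es1 i)) P =
            count (fun d => d.1 == tnth es1 i) P by apply: eq_count.
  by rewrite add0n !oddD addbb.
Qed.

End CycleVec.

Section NotTrees.
Variables (E : finType) (n : nat) (lab : E * bool -> 'I_n) (R : realType).

Lemma adj_sym (F : {set E}) : symmetric (adj lab F).
Proof.
move=> x y; rewrite /adj; apply/existsP/existsP => [][e /andP[eF J]];
by exists e; rewrite eF joins_sym.
Qed.

Lemma adj_edge (F : {set E}) e : e \in F -> adj lab F (lab (e, false)) (lab (e, true)).
Proof. by move=> eF; apply/existsP; exists e; rewrite eF /joins !eqxx. Qed.

Lemma comp_ends (F : {set E}) u e a c : e \in F -> joins lab e a c ->
  lab (e, false) \in component lab F u -> connect (adj lab F) u a.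
Proof.
move=> eF J; rewrite inE => Hu.
case: (joins_end J) => ->; first done.
by apply: connect_trans Hu (connect1 _); apply: adj_edge.
Qed.

Lemma notrees_vec (F : {set E}) : ~ trees_or_odd_unicyclic lab F ->
  exists v : {ffun E -> R}, [/\ vp lab v = 0, forall e, e \notin F -> v e = 0 & v != 0].
Proof.
move=> H; have [u Hu] := not_all_ex_not _ _ H.
move: Hu; cbv zeta.
set FC := [set e in F | lab (e, false) \in component lab F u].
move/not_or_and => [HA HB].
have [X [XFC Xc]] : exists X : {set E}, X \subset FC /\ is_cycle_set lab X.
  by apply: NNPP => Hn; apply: HA => X HX Hc; apply: Hn; exists X; split.
have FCF x : x \in FC -> x \in F by rewrite inE => /andP[].
have FCc x : x \in FC -> lab (x, false) \in component lab F u by rewrite inE => /andP[].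
have cyc_sub (X' : {set E}) k (es : k.+1.-tuple E) : X' \subset FC -> X' = [set x in es] ->
    forall x, x \in es -> x \in FC.
  by move=> /subsetP S HX1 x Hx; apply: S; rewrite HX1 inE.
case: (Xc) => k [es [vs [Ues Uvs HX J]]].
have cardX : #|X| = k.+1 by rewrite HX cardsE (card_uniqP Ues) size_tuple.
case: (boolP (odd #|X|)) => Ho; last first.
  apply: (even_cycle_vec R Ues J); last by move: Ho; rewrite cardX.
  by move=> x /(cyc_sub _ _ _ XFC HX); apply: FCF.
have [Y [YFC Yc YX]] : exists Y : {set E}, [/\ Y \subset FC, is_cycle_set lab Y & Y <> X].
  apply: NNPP => Hn; apply: HB; exists X; split => // Y HY HYc.
  by apply: NNPP => Hne; apply: Hn; exists Y; split.
case: (Yc) => k2 [es2 [vs2 [Ues2 Uvs2 HY J2]]].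
have cardY : #|Y| = k2.+1 by rewrite HY cardsE (card_uniqP Ues2) size_tuple.
case: (boolP (odd #|Y|)) => HoY; last first.
  apply: (even_cycle_vec R Ues2 J2); last by move: HoY; rewrite cardY.
  by move=> x /(cyc_sub _ _ _ YFC HY); apply: FCF.
have F1 x : x \in es -> x \in F by move=> /(cyc_sub _ _ _ XFC HX); apply: FCF.
have F2 x : x \in es2 -> x \in F by move=> /(cyc_sub _ _ _ YFC HY); apply: FCF.
have c1 : connect (adj lab F) u (tnth vs ord0).
  apply: (comp_ends (e := tnth es ord0) (c := tnth vs (ordS ord0))).
  - by apply/F1/mem_tnth.
  - exact: J.
  - by apply/FCc/(cyc_sub _ _ _ XFC HX)/mem_tnth.
have c2 : connect (adj lab F) u (tnth vs2 ord0).
  apply: (comp_ends (e := tnth es2 ord0) (c := tnth vs2 (ordS ord0))).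
  - by apply/F2/mem_tnth.
  - exact: J2.
  - by apply/FCc/(cyc_sub _ _ _ YFC HY)/mem_tnth.
have CS := sym_connect_sym (adj_sym F).
have C12 : connect (adj lab F) (tnth vs ord0) (tnth vs2 ord0).
  by apply: connect_trans c2; rewrite CS.
have C21 : connect (adj lab F) (tnth vs2 ord0) (tnth vs ord0) by rewrite CS.
have [e He] : exists e, (e \in es) != (e \in es2).
  apply: NNPP => Hn; apply: YX; rewrite HY HX; apply/setP => x; rewrite !inE.
  case E1: (x \in es2); case E2: (x \in es) => //; exfalso; apply: Hn; exists x;
  by rewrite E1 E2.
rewrite cardX in Ho; rewrite cardY in HoY.
case: (boolP (e \in es)) => H1 in He.
  by apply: (two_cycle_vec R Ues J J2 F1 F2 Ho HoY H1 _ C12); move: He; case: (e \in es2).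
have H2 : e \in es2 by move: He; case: (e \in es2).
by apply: (two_cycle_vec R Ues2 J2 J F2 F1 HoY Ho H2 H1 C21).
Qed.

End NotTrees.

Section Cyc.
Variables (E : finType) (n : nat) (lab : E * bool -> 'I_n).

Lemma dart_other (d d' : E * bool) : d.1 = d'.1 -> d != d' -> d' = sigma1 d.
Proof.
case: d d' => e b [e' b'] /= <-; rewrite /sigma1 /=.
by case: b b' => [] [] //; rewrite eqxx.
Qed.

Lemma ordSS_neq k (t : 'I_k.+1) : (1 < k)%N -> ordS (ordS t) != t.
Proof.
move=> Hk; apply/eqP => /(congr1 val) /=; rewrite modSm.
have Ht := ltn_ord t.
case: (ltngtP t.+1 k) => H.
- by rewrite modn_small; lia.
- have -> : t.+2 = (1 + k.+1)%N by lia.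
  by rewrite modnDr modn_small; lia.
- by rewrite H modnn; lia.
Qed.

Lemma cycle_of_walk k (D : 'I_k.+1 -> E * bool) :
  injective (fun t => lab (D t)) ->
  (forall t, lab (sigma1 (D t)) = lab (D (ordS t))) ->
  (k = 1%N -> D (ordS ord0) != sigma1 (D ord0)) ->
  [/\ uniq [tuple (D t).1 | t < k.+1], uniq [tuple lab (D t) | t < k.+1] &
      forall t, joins lab (tnth [tuple (D t).1 | t < k.+1] t)
                  (tnth [tuple lab (D t) | t < k.+1] t)
                  (tnth [tuple lab (D t) | t < k.+1] (ordS t))].
Proof.
move=> Hinj Hst Hnb; split.
- apply/tuple_uniqP => t t'; rewrite !tnth_mktuple => He.
  apply/eqP; apply: contraT => Htt.
  have Hd : D t != D t'.
    by apply: contra Htt => /eqP Hd; apply/eqP/Hinj; rewrite /= Hd.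
  have E1 := dart_other He Hd.
  have E2 : D t = sigma1 (D t') by rewrite E1 sigma1K.
  have T1 : t' = ordS t by apply: Hinj; rewrite /= E1 Hst.
  have T2 : t = ordS t' by apply: Hinj; rewrite /= E2 Hst.
  case: (ltngtP k 1) => Hk.
  + suff : t == t' by rewrite (negbTE Htt).
    apply/eqP/val_inj => /=.
    have := ltn_ord t; have := ltn_ord t'; lia.
  + by have := ordSS_neq t Hk; rewrite -T1 -T2 eqxx.
  + subst k; case: (eqVneq t ord0) => Ht0.
      by move: T1 E1; rewrite Ht0 => T1 E1; have := Hnb erefl; rewrite -T1 E1 eqxx.
    have Ht' : t' = ord0.
      apply/val_inj => /=; move: Htt Ht0; rewrite -!val_eqE /= => /eqP Htt /eqP Ht0.
      have := ltn_ord t; have := ltn_ord t'; lia.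
    by move: T2 E2; rewrite Ht' => T2 E2; have := Hnb erefl; rewrite -T2 E2 eqxx.
- by apply/tuple_uniqP => t t'; rewrite !tnth_mktuple; apply: Hinj.
- by move=> t; rewrite !tnth_mktuple -Hst; apply: joins_dart.
Qed.

Definition NB (S : {set E}) := forall d : E * bool, d.1 \in S ->
  exists d' : E * bool, [&& d' != sigma1 d, lab d' == lab (sigma1 d) & d'.1 \in S].

Lemma walk_cycle (S : {set E}) (d0 : E * bool) : NB S -> d0.1 \in S ->
  exists k (es : k.+1.-tuple E) (vs : k.+1.-tuple 'I_n),
    [/\ uniq es, uniq vs, (forall i, joins lab (tnth es i) (tnth vs i) (tnth vs (ordS i))),
        (forall x, x \in es -> x \in S) & (lab d0 \in vs -> d0.1 \in es)].
Proof.
move=> HNB dS.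
pose nxt d := odflt d [pick d' | [&& d' != sigma1 d, lab d' == lab (sigma1 d) & d'.1 \in S]].
have Hnxt d : d.1 \in S ->
    [&& nxt d != sigma1 d, lab (nxt d) == lab (sigma1 d) & (nxt d).1 \in S].
  move=> Hd; rewrite /nxt; case: pickP => [d' //|H0].
  by case: (HNB d Hd) => d' Hd'; rewrite H0 in Hd'.
pose ds t := iter t nxt d0.
have HS t : (ds t).1 \in S.
  by elim: t => //= t IH; case/and3P: (Hnxt _ IH).
have Hlab t : lab (ds t.+1) = lab (sigma1 (ds t)).
  by case/and3P: (Hnxt _ (HS t)) => _ /eqP.
have Hnb t : ds t.+1 != sigma1 (ds t) by case/and3P: (Hnxt _ (HS t)).
pose a t := lab (ds t).
have first_dup m : ~~ uniq (map a (iota 0 m)) ->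
    exists2 j, (j < m)%N & a j \in map a (iota 0 j).
  elim: m => [//|m IH].
  rewrite (_ : iota 0 m.+1 = iota 0 m ++ [:: m]); last by rewrite -addn1 iotaD.
  rewrite map_cat cat_uniq => Hn.
  case U: (uniq (map a (iota 0 m))) in Hn.
    by exists m => //; move: Hn; rewrite /= orbF andbT negbK.
  by case: IH => [|j Hj Pj]; [rewrite U | exists j => //; apply: ltnW].
have [j0 Hj0 Pj0] : exists2 j, (j < n.+1)%N & a j \in map a (iota 0 j).
  apply: first_dup; apply/negP => U.
  have := max_card (mem (map a (iota 0 n.+1))).
  by rewrite (card_uniqP U) size_map size_iota card_ord ltnn.
have exP : exists j, a j \in map a (iota 0 j) by exists j0.
case: (ex_minnP exP) => j Pj jmin.
have Uj : uniq (map a (iota 0 j)).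
  apply/negPn/negP => /first_dup [j' Hj' Pj'].
  by have := jmin _ Pj'; rewrite leqNgt Hj'.
set i := index (a j) (map a (iota 0 j)).
have lt_ij : (i < j)%N.
  by rewrite -[X in (_ < X)%N](size_iota 0 j) -(size_map a) index_mem.
have ai : a i = a j.
  have := nth_index (a 0%N) Pj.
  by rewrite -/i (nth_map 0%N) ?size_iota // nth_iota // add0n.
have inj x y : (x < j)%N -> (y < j)%N -> a x = a y -> x = y.
  move=> Hx Hy Hxy.
  have := nth_uniq (a 0%N) (i := x) (j := y) _ _ Uj.
  rewrite !size_map size_iota => /(_ Hx Hy).
  rewrite !(nth_map 0%N) ?size_iota // !nth_iota // !add0n Hxy eqxx.
  by move=> /esym /eqP.
set k := (j - i).-1.
have Hk : k.+1 = (j - i)%N by rewrite /k prednK // subn_gt0.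
pose D (t : 'I_k.+1) := ds (i + t)%N.
have Hinj : injective (fun t => lab (D t)).
  move=> t t' /= H; apply/val_inj => /=.
  have H1 : (t < j - i)%N by rewrite -Hk ltn_ord.
  have H2 : (t' < j - i)%N by rewrite -Hk ltn_ord.
  have H3 : (i + t = i + t')%N by apply: inj => //; lia.
  lia.
have Hst t : lab (sigma1 (D t)) = lab (D (ordS t)).
  rewrite /D -Hlab; case: (ltngtP t k) => Htk.
  - by rewrite /= modn_small ?addnS // ltnS.
  - by have := ltn_ord t; rewrite ltnS leqNgt Htk.
  - rewrite /= Htk modnn addn0.
    have Hj : (i + k).+1 = j by lia.
    transitivity (a j); first by rewrite -Hj.
    by rewrite -ai.
have Hnb1 : k = 1%N -> D (ordS ord0) != sigma1 (D ord0).
  move=> k1.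
  have e1 : val (ordS (@ord0 k)) = 1%N by rewrite /= k1.
  by rewrite /D e1 addn0 addn1; apply: Hnb.
have [Ues Uvs J] := cycle_of_walk Hinj Hst Hnb1.
exists k, [tuple (D t).1 | t < k.+1], [tuple lab (D t) | t < k.+1]; split => //.
- by move=> x /tnthP [t ->]; rewrite tnth_mktuple; apply: HS.
- move=> /tnthP [t]; rewrite tnth_mktuple => Ht.
  have H1 : (t < j - i)%N by rewrite -Hk ltn_ord.
  have H0 : (i + t = 0)%N by apply: inj; [lia | lia | rewrite /a /= -Ht].
  by apply/tnthP; exists t; rewrite tnth_mktuple /D H0.
Qed.

Lemma cycle_vs k1 (es1 : k1.+1.-tuple E) vs1 k2 (es2 : k2.+1.-tuple E) vs2 :
  (forall i, joins lab (tnth es1 i) (tnth vs1 i) (tnth vs1 (ordS i))) ->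
  (forall i, joins lab (tnth es2 i) (tnth vs2 i) (tnth vs2 (ordS i))) ->
  [set x in es1] = [set x in es2] -> forall m, tnth vs1 m \in vs2.
Proof.
move=> J1 J2 Heq m.
have : tnth es1 m \in [set x in es1] by rewrite inE mem_tnth.
rewrite Heq inE => /tnthP [t Ht].
have := J1 m; rewrite Ht => J1m.
have := joins_mem J1m (J2 t).
by rewrite !inE => /orP [] /eqP ->; apply: mem_tnth.
Qed.

End Cyc.

Section Kernel.
Variables (E : finType) (n : nat) (lab : E * bool -> 'I_n) (R : realType).

Lemma sum_delta (k : nat) (f : 'I_k -> R) i : \sum_j (j == i)%:R * f j = f i.
Proof.
rewrite (bigD1 i) //= eqxx mul1r big1 ?addr0 // => j /negbTE ->; by rewrite mul0r.
Qed.

Lemma kernel_zero (F : {set E}) (v : {ffun E -> R}) :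
  trees_or_odd_unicyclic lab F -> vp lab v = 0 -> (forall e, e \notin F -> v e = 0) ->
  v = 0.
Proof.
move=> Htr Hvp HF.
apply/ffunP => e0; rewrite ffunE; apply/eqP; apply: contraT => Hne.
set u := lab (e0, false).
set C := component lab F u.
have inC x : (x \in C) = connect (adj lab F) u x by rewrite inE.
have vF e : v e != 0 -> e \in F.
  by move=> H; apply: contraTT H => /HF ->; rewrite negbK.
have ends e b : e \in F -> lab (e, b) \in C ->
    (lab (e, false) \in C) && (lab (e, true) \in C).
  move=> eF; rewrite !inC => H.
  have Af := adj_edge lab eF.
  have Ab : adj lab F (lab (e, true)) (lab (e, false)) by rewrite adj_sym.
  case: b H => H.
    by rewrite H andbT; apply: connect_trans H (connect1 Ab).
  by rewrite H /=; apply: connect_trans H (connect1 Af).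
set S := [set e | (v e != 0) && (lab (e, false) \in C)].
have inS e b : v e != 0 -> lab (e, b) \in C -> e \in S.
  move=> H Hc; rewrite inE H /=.
  by case/andP: (ends e b (vF _ H) Hc).
have SC e : e \in S -> [/\ e \in F, lab (e, false) \in C & lab (e, true) \in C].
  rewrite inE => /andP [H Hc]; have eF := vF _ H.
  by case/andP: (ends e false eF Hc) => ? ?; split.
have vpy y : \sum_(d : E * bool) (lab d == y)%:R * v d.1 = 0.
  rewrite -dartsum; have := congr1 (fun f : {ffun 'I_n -> R} => f y) Hvp.
  by rewrite !ffunE.
have NBS : NB lab S.
  move=> d dS; apply: NNPP => Hno.
  have HyC : lab (sigma1 d) \in C.
    by case: (SC _ dS); rewrite /sigma1; case: (d.2).
  have := vpy (lab (sigma1 d)).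
  rewrite (bigD1 (sigma1 d)) //= eqxx mul1r big1 ?addr0.
    move=> H; move: dS; rewrite inE => /andP [Hv _].
    by move: Hv; rewrite -H /sigma1 /= eqxx.
  move=> d' Hd'.
  case: (eqVneq (lab d') (lab (sigma1 d))) => Hl; last by rewrite mul0r.
  case: (eqVneq (v d'.1) 0) => Hv; first by rewrite Hv mulr0.
  exfalso; apply: Hno; exists d'; rewrite Hd' Hl eqxx /=.
  by apply: (inS _ d'.2 Hv); rewrite -surjective_pairing Hl.
have e0S : e0 \in S by rewrite inE Hne inC connect0.
have [k [es [vs [Ues Uvs J Sub _]]]] := walk_cycle (d0 := (e0, false)) NBS e0S.
have FCsub k' (es' : k'.+1.-tuple E) : (forall x, x \in es' -> x \in S) ->
    [set x in es'] \subset [set e in F | lab (e, false) \in component lab F u].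
  move=> H; apply/subsetP => x; rewrite !inE => /H /SC [H1 H2 _].
  by rewrite H1 -inC.
have Hcyc k' (es' : k'.+1.-tuple E) (vs' : k'.+1.-tuple 'I_n) : uniq es' -> uniq vs' ->
    (forall i, joins lab (tnth es' i) (tnth vs' i) (tnth vs' (ordS i))) ->
    is_cycle_set lab [set x in es'].
  by move=> *; exists k', es', vs'; split.
have := Htr u; cbv zeta; case => [Htree | [X [XFC Xc Xodd Xuni]]].
  by exfalso; apply: (Htree [set x in es]); [apply: FCsub | apply: Hcyc Uvs J].
have CX : [set x in es] = X by apply: Xuni; [apply: FCsub | apply: Hcyc Uvs J].
case: Xc => kX [esX [vsX [UesX UvsX HX JX]]].
have XS x : x \in esX -> x \in S.
  move=> Hx; have : x \in [set x in esX] by rewrite inE.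
  by rewrite -HX -CX inE; apply: Sub.
have key i (d : E * bool) : lab d = tnth vsX i -> v d.1 != 0 -> d.1 \in esX.
  move=> Hd Hv.
  have vC : tnth vsX i \in C.
    have [_ H1 H2] := SC _ (XS _ (mem_tnth i esX)).
    by case: (joins_end (JX i)) => ->.
  have dS : d.1 \in S by apply: (inS _ d.2 Hv); rewrite -surjective_pairing Hd.
  have [k1 [es1 [vs1 [Ues1 Uvs1 J1 Sub1 Hl1]]]] := walk_cycle NBS dS.
  have E1 : [set x in es1] = [set x in esX].
    by rewrite -HX; apply: Xuni; [apply: FCsub | apply: Hcyc Uvs1 J1].
  have := cycle_vs JX J1 (esym E1) i; rewrite -Hd => /Hl1 H1.
  have : d.1 \in [set x in es1] by rewrite inE.
  by rewrite E1 inE.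
have alt i : v (tnth esX i) + v (tnth esX (ord_pred i)) = 0.
  have := vpy (tnth vsX i); rewrite -dartsum => H0; rewrite -{}H0.
  rewrite (bigID (fun e => e \in esX)) /= [X in _ = _ + X]big1 ?addr0; last first.
    move=> e He; case: (eqVneq (v e) 0) => Hv; first by rewrite Hv mulr0.
    have h b : (lab (e, b) == tnth vsX i) = false.
      by apply/negP => /eqP Hb; move: (key i (e, b) Hb Hv); rewrite /= (negbTE He).
    by rewrite /inc !h mul0r.
  rewrite -big_uniq // big_tuple.
  rewrite (eq_bigr (fun j => ((j == i)%:R + (j == ord_pred i)%:R) * v (tnth esX j)));
    last first.
    move=> j _; rewrite (joins_inc _ (JX j)) natrD tnth_uniq_eq //.
    rewrite tnth_uniq_eq //; congr ((_ + _%:R) * _).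
    by rewrite -[j == _](inj_eq (@ordS_inj _)) ord_predK.
  by rewrite (eq_bigr _ (fun j _ => mulrDl _ _ _)) big_split /= !sum_delta.
have f_alt i : v (tnth esX (ordS i)) = - v (tnth esX i).
  by have := alt (ordS i); rewrite ordSK => H; apply/eqP; rewrite -addr_eq0 H.
have iterv t : nat_of_ord (iter t (@ordS kX.+1) (@ord0 kX)) = (t %% kX.+1)%N.
  elim: t => [|t IH]; first by rewrite mod0n.
  by rewrite /= IH modSm.
have itv t : v (tnth esX (iter t (@ordS kX.+1) ord0)) = (-1) ^+ t * v (tnth esX ord0).
  elim: t => [|t IH]; first by rewrite expr0 mul1r.
  by rewrite /= f_alt IH exprS mulN1r mulNr.
have Hfin : iter kX.+1 (@ordS kX.+1) (@ord0 kX) = ord0 by apply: val_inj => /=; rewrite iterv modSm modnn.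
have cardX : odd kX.+1.
  by have := Xodd; rewrite HX cardsE (card_uniqP UesX) size_tuple.
have := itv kX.+1; rewrite Hfin -signr_odd cardX expr1 mulN1r => H.
have H0 : v (tnth esX ord0) = 0 by lra.
have := XS _ (mem_tnth ord0 esX); rewrite inE => /andP [Hv _].
by rewrite H0 eqxx in Hv.
Qed.

End Kernel.

Lemma ffun0E (T : finType) (R : nmodType) (x : T) : (0 : {ffun T -> R}) x = 0.
Proof. by rewrite ffunE. Qed.

Section Static.
Variables (E : finType) (n : nat) (lab : E * bool -> 'I_n) (R : realType).

Lemma sum_delta' (f : 'I_n -> R) a : \sum_x (a == x)%:R * f x = f a.
Proof.
rewrite (bigD1 a) //= eqxx mul1r big1 ?addr0 // => x; rewrite eq_sym => /negbTE ->.
by rewrite mul0r.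
Qed.

Lemma static_zero (v : {ffun E -> R}) e : connected_graph lab -> ~~ bipartite_graph lab ->
  vp lab v = 0 -> static_edge lab e -> v e = 0.
Proof.
move=> Hcon Hnb Hvp /existsP [u0 /existsP [col /forallP Hcol]].
set C := component lab (setT :\ e) u0 in Hcol.
have Hc f : f != e -> lab (f, false) \in C -> col (lab (f, false)) != col (lab (f, true)).
  by move=> Hf Hin; have := Hcol f; rewrite in_setD1 in_setT Hf /= Hin.
have closedC f : f != e -> (lab (f, false) \in C) = (lab (f, true) \in C).
  move=> Hf.
  have Af : adj lab (setT :\ e) (lab (f, false)) (lab (f, true)).
    by apply: adj_edge; rewrite in_setD1 in_setT Hf.
  have Ab : adj lab (setT :\ e) (lab (f, true)) (lab (f, false)) by rewrite adj_sym.
  rewrite !inE; apply/idP/idP => H.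
    exact: connect_trans H (connect1 Af).
  exact: connect_trans H (connect1 Ab).
have u0C : u0 \in C by rewrite inE connect0.
have allC : (forall f, joins lab f (lab (e, false)) (lab (e, true)) -> True) ->
    (forall x y, adj lab setT x y -> x \in C -> y \in C) -> forall y, y \in C.
  move=> _ Hcl y; have := Hcon u0 y; move/connectP => [p Hp ->].
  suff S : forall x q, path (adj lab setT) x q -> x \in C -> last x q \in C.
    by apply: S Hp u0C.
  move=> x q; elim: q x => [|z q IH] x /=; first by [].
  by case/andP => Hxz Hq xC; apply: (IH z Hq); apply: Hcl xC.
pose s x : R := if col x then 1 else -1.
pose g y : R := if y \in C then s y else 0.
have sum0 : \sum_x g x * vp lab v x = 0.
  by rewrite big1 // => x _; rewrite Hvp ffunE mulr0.
have Hsum : \sum_x g x * vp lab v x =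
            \sum_f v f * (g (lab (f, false)) + g (lab (f, true))).
  transitivity (\sum_x \sum_f g x * ((inc lab x f)%:R * v f)).
    by apply: eq_bigr => x _; rewrite ffunE mulr_sumr.
  rewrite exchange_big; apply: eq_bigr => f _.
  transitivity (\sum_x v f * ((lab (f, false) == x)%:R * g x + (lab (f, true) == x)%:R * g x)).
    by apply: eq_bigr => x _; rewrite /inc natrD; ring.
  by rewrite -mulr_sumr big_split /= !sum_delta'.
move: Hsum; rewrite sum0 (bigD1 e) //= big1 ?addr0 => [H|f Hf]; last first.
  rewrite /g -closedC //; case: ifP => H; last by rewrite addr0 mulr0.
  have := Hc f Hf H; rewrite /s.
  by case: (col _); case: (col _) => //= _; rewrite ?addrN ?addNr mulr0.
have Hne : g (lab (e, false)) + g (lab (e, true)) != 0.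
  rewrite /g /s.
  have two : (2 : R) != 0 by rewrite pnatr_eq0.
  case Ha: (lab (e, false) \in C); case Hb: (lab (e, true) \in C).
  - case Hca: (col (lab (e, false))); case Hcb: (col (lab (e, true))).
    + by rewrite -[1 + 1]/(1 *+ 2).
    + exfalso; move/negP: Hnb; apply.
      have Hcl : forall x y, adj lab setT x y -> x \in C -> y \in C.
        move=> x y /existsP [f /andP [_ Jf]].
        case: (eqVneq f e) => Hfe.
          move: Jf; rewrite Hfe /joins => /orP [] /andP [/eqP <- /eqP <-] //.
        move: Jf; rewrite /joins => /orP [] /andP [/eqP <- /eqP <-].
          by rewrite closedC.
        by rewrite closedC.
      have AC := allC (fun _ _ => I) Hcl.
      apply/existsP; exists col; apply/forallP => f; apply/implyP => _.
      apply/implyP => _; case: (eqVneq f e) => [->|Hfe]; first by rewrite Hca Hcb.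
      by apply: Hc Hfe (AC _).
    + exfalso; move/negP: Hnb; apply.
      have Hcl : forall x y, adj lab setT x y -> x \in C -> y \in C.
        move=> x y /existsP [f /andP [_ Jf]].
        case: (eqVneq f e) => Hfe.
          move: Jf; rewrite Hfe /joins => /orP [] /andP [/eqP <- /eqP <-] //.
        move: Jf; rewrite /joins => /orP [] /andP [/eqP <- /eqP <-].
          by rewrite closedC.
        by rewrite closedC.
      have AC := allC (fun _ _ => I) Hcl.
      apply/existsP; exists col; apply/forallP => f; apply/implyP => _.
      apply/implyP => _; case: (eqVneq f e) => [->|Hfe]; first by rewrite Hca Hcb.
      by apply: Hc Hfe (AC _).
    + by rewrite -opprD oppr_eq0 -[1 + 1]/(1 *+ 2).
  - by case: (col _); rewrite addr0 ?oppr_eq0 oner_eq0.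
  - by case: (col _); rewrite add0r ?oppr_eq0 oner_eq0.
  - exfalso.
    have Hcl : forall x y, adj lab setT x y -> x \in C -> y \in C.
      move=> x y /existsP [f /andP [_ Jf]].
      case: (eqVneq f e) => Hfe.
        by move: Jf; rewrite Hfe /joins => /orP [] /andP [/eqP <- /eqP <-]; rewrite ?Ha ?Hb.
      move: Jf; rewrite /joins => /orP [] /andP [/eqP <- /eqP <-].
        by rewrite closedC.
      by rewrite closedC.
    by have := allC (fun _ _ => I) Hcl (lab (e, false)); rewrite Ha.
by move/eqP: H; rewrite eq_sym mulf_eq0 (negbTE Hne) orbF => /eqP.
Qed.

Lemma exists_eps (T : finType) (P : {set T}) (f : T -> R) :
  (forall x, x \in P -> 0 < f x) -> exists2 eps : R, 0 < eps & forall x, x \in P -> eps <= f x.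
Proof.
move=> Hf.
have H : forall s : seq T, (forall x, x \in s -> 0 < f x) ->
    exists2 eps : R, 0 < eps & forall x, x \in s -> eps <= f x.
  elim => [_|x s IH Hs]; first by exists 1.
  case: IH => [y Hy|eps He Hle]; first by apply: Hs; rewrite inE Hy orbT.
  exists (Num.min (f x) eps); first by rewrite lt_min He Hs ?mem_head.
  move=> y; rewrite inE => /orP [/eqP ->|Hy]; first by rewrite ge_min lexx.
  by rewrite ge_min (Hle _ Hy) orbT.
case: (H (enum P)) => [x|eps He Hle]; first by rewrite mem_enum; apply: Hf.
by exists eps => // x Hx; apply: Hle; rewrite mem_enum.
Qed.

Lemma eps_bound (eps x y : R) : 0 < eps -> 0 < x -> eps <= x / (`|y| + 1) ->
  0 <= x + eps * y /\ 0 <= x - eps * y.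
Proof.
move=> He Hx H.
have Hn := normr_ge0 y.
have Hp : 0 < `|y| + 1 by lra.
rewrite ler_pdivlMr // in H.
have : `|eps * y| <= x by rewrite normrM gtr0_norm //; nra.
rewrite ler_norml => /andP [H1 H2]; split; lra.
Qed.

Lemma vpL (a c : {ffun E -> R}) (t : R) :
  vp lab [ffun e => a e + t * c e] = [ffun x => vp lab a x + t * vp lab c x].
Proof.
apply/ffunP => x; rewrite /vp !ffunE mulr_sumr -big_split /=.
by apply: eq_bigr => e _; rewrite ffunE; ring.
Qed.

End Static.

Unset Implicit Arguments.

Theorem lemmaA5 (R : realType) (g n : nat) (kappa : seq nat) (E : finType)
    (s0 : {perm E * bool}) (lab : E * bool -> 'I_n) (b : {ffun 'I_n -> R}) :
  is_ribbon_graph g kappa s0 lab ->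
  ~~ bipartite_graph lab ->
  forall w : {ffun E -> R}, vp lab w = b ->
  (is_vertex (inP lab b) w <->
     ((forall e, ~~ static_edge lab e -> 0 <= w e) /\
      trees_or_odd_unicyclic lab (Fset lab w))) /\
  (is_vertex (inP lab b) w ->
     forall v : {ffun E -> R},
       feasible_dir (inP lab b) w v <->
       (vp lab v = 0 /\
        forall e, ~~ static_edge lab e -> e \notin Fset lab w -> 0 <= v e)).
Proof.
move=> [_ Hcon _ _ _] Hnb w Hw.
have nsF e : ~~ static_edge lab e -> e \notin Fset lab w -> 0 <= w e -> w e = 0.
  move=> Hs; rewrite inE Hs /= -leNgt => H H0.
  by apply/eqP; rewrite eq_le H H0.
have epsF (v : {ffun E -> R}) : exists2 eps : R, 0 < eps &
    forall e, e \in Fset lab w -> eps <= w e / (`|v e| + 1).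
  apply: (@exists_eps R E (Fset lab w) (fun e => w e / (`|v e| + 1))).
  move=> e; rewrite inE => /andP [_ Hw0]; apply: divr_gt0 => //.
  by have := normr_ge0 (v e); lra.
have inFw e : e \in Fset lab w -> 0 < w e by rewrite inE => /andP [].
split.
- split.
  + case => [[_ Hnn] Hext]; split => //.
    apply: NNPP => Htr.
    have [v [Hv0 HvF Hvn]] := notrees_vec R Htr.
    have [eps He Hle] := epsF v.
    have bound e : ~~ static_edge lab e -> 0 <= w e + eps * v e /\ 0 <= w e - eps * v e.
      move=> Hs; case: (boolP (e \in Fset lab w)) => HeF.
        exact: (eps_bound He (inFw e HeF) (Hle e HeF)).
      by rewrite (HvF e HeF) mulr0 addr0 subr0; have := Hnn e Hs.
    pose u1 := [ffun e => w e + eps * v e].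
    pose u2 := [ffun e => w e + (- eps) * v e].
    have P1 : inP lab b u1.
      split; first by apply/ffunP => x; rewrite /u1 /u2 vpL ffunE Hv0 ffun0E mulr0 addr0 Hw.
      by move=> e Hs; rewrite ffunE; case: (bound e Hs).
    have P2 : inP lab b u2.
      split; first by apply/ffunP => x; rewrite /u1 /u2 vpL ffunE Hv0 ffun0E mulr0 addr0 Hw.
      by move=> e Hs; rewrite ffunE mulNr; case: (bound e Hs).
    have H12 : u1 = u2.
      apply: (Hext u1 u2 (1 / 2) P1 P2).
      - by apply/andP; split; lra.
      - by apply/ffunP => e; rewrite !ffunE; lra.
    move/negP: Hvn; apply; apply/eqP/ffunP => e.
    have := congr1 (fun f : {ffun E -> R} => f e) H12; rewrite !ffunE => H.
    have H2 : eps * v e = 0 by lra.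
    by move/eqP: H2; rewrite mulf_eq0 gt_eqF //= => /eqP.
  + case => [Hnn Htr]; split; first by split.
    move=> u1 u2 t [Hu1 Hn1] [Hu2 Hn2] /andP [t0 t1] Hwt.
    pose z := [ffun e => u1 e + (-1) * u2 e].
    have Hz0 : vp lab z = 0.
      by apply/ffunP => x; rewrite /z vpL ffunE Hu1 Hu2 ffun0E; ring.
    have Hz := kernel_zero Htr Hz0.
    have : z = 0.
      apply: Hz => e HeF.
      case: (boolP (static_edge lab e)) => Hs.
        exact: (static_zero Hcon Hnb Hz0 Hs).
      have w0 := nsF e Hs HeF (Hnn e Hs).
      have := congr1 (fun f : {ffun E -> R} => f e) Hwt; rewrite ffunE w0 => H.
      have h1 : 0 <= t * u1 e by apply: mulr_ge0; [lra | apply: Hn1].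
      have h2 : 0 <= (1 - t) * u2 e by apply: mulr_ge0; [lra | apply: Hn2].
      have k1 : t * u1 e = 0 by lra.
      have k2 : (1 - t) * u2 e = 0 by lra.
      move/eqP: k1; rewrite mulf_eq0 gt_eqF //= => /eqP k1.
      have t1' : 1 - t != 0 by rewrite subr_eq0; apply/eqP; lra.
      move/eqP: k2; rewrite mulf_eq0 (negbTE t1') /= => /eqP k2.
      by rewrite ffunE k1 k2; ring.
    move=> Hz'; apply/ffunP => e.
    have := congr1 (fun f : {ffun E -> R} => f e) Hz'; rewrite !ffunE; lra.
- move=> [[_ Hnn] _] v; split.
  + case => eps [He [Hv1 Hn1]]; split.
      apply/ffunP => x; have := congr1 (fun f : {ffun 'I_n -> R} => f x) Hv1.
      rewrite vpL ffunE Hw => H; rewrite ffun0E.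
      have H2 : eps * vp lab v x = 0 by lra.
      by move/eqP: H2; rewrite mulf_eq0 gt_eqF //= => /eqP.
    move=> e Hs HF; have := Hn1 e Hs.
    by rewrite ffunE (nsF e Hs HF (Hnn e Hs)) add0r pmulr_rge0.
  + case => Hv0 Hvn.
    have [eps He Hle] := epsF v.
    exists eps; split => //; split.
      by apply/ffunP => x; rewrite vpL ffunE Hv0 ffun0E mulr0 addr0 Hw.
    move=> e Hs; rewrite ffunE; case: (boolP (e \in Fset lab w)) => HeF.
      by case: (eps_bound He (inFw e HeF) (Hle e HeF)).
    rewrite (nsF e Hs HeF (Hnn e Hs)) add0r; apply: mulr_ge0; last exact: Hvn.
    by apply: ltW.
Qed.
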